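(* $P_n$ has exactly one matching ordering for $n=1$, exactly three matching orderings for $n=3$ and $n=4$, and exactly two matching orderings for every other $n\ge 2$.
   Context: A tournament is a finite, non-null, loopless directed graph in which for any two distinct vertices $u,v$ there is exactly one edge with both ends in $\{u,v\}$; write $u\to v$ for the edge from $u$ to $v$. Given an ordering $v_1,\dots,v_n$ of the vertices, a backedge is an edge $v_j\to v_i$ with $j>i$; the ordering is a matching ordering if every vertex is the head or tail of at most one backedge. $P_n$ is the tournament on $v_1,\dots,v_n$ with $v_i\to v_j$ if $j-i\ge2$ and $v_{i+1}\to v_i$ for $1\le i\le n-1$. *)

(* Defs.v *)
From mathcomp Require Import all_boot.
Set Implicit Arguments. Unset Strict Implicit. Unset Printing Implicit Defensive.

(* A directed graph on a finite vertex type T is given by its edge relation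
   e : rel T, with  e u v  meaning  u -> v. *)
Definition is_tournament (T : finType) (e : rel T) : Prop :=
  0 < #|T| /\ (forall u, ~~ e u u) /\
  (forall u v, u != v -> (e u v && ~~ e v u) || (e v u && ~~ e u v)).

(* An ordering v_1,...,v_n of the vertices is an injective (hence bijective)
   map  o : 'I_#|T| -> T ; position i holds vertex o i. *)
Definition is_ordering (T : finType) (o : {ffun 'I_#|T| -> T}) : bool :=
  injectiveb o.

Definition backedge (T : finType) (e : rel T) (o : {ffun 'I_#|T| -> T})
  (p : 'I_#|T| * 'I_#|T|) : bool :=
  (p.1 < p.2) && e (o p.2) (o p.1).

Definition matching_ordering (T : finType) (e : rel T) (o : {ffun 'I_#|T| -> T})
  : bool :=
  is_ordering o &&
  [forall v : T, #|[set p | backedge e o p && ((o p.1 == v) || (o p.2 == v))]| <= 1].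

(* P_n on vertices v_1..v_n, represented by 'I_n (v_{k+1} is k):
   v_i -> v_j iff j - i >= 2, and v_{i+1} -> v_i. *)
Definition Pn_edge (n : nat) : rel 'I_n :=
  fun u v => (u.+2 <= v) || (u == v.+1 :> nat).

Definition num_matching_orderings (T : finType) (e : rel T) : nat :=
  #|[set o : {ffun 'I_#|T| -> T} | matching_ordering e o]|.

(* Main.v *)
Require Import Defs.
From mathcomp Require Import all_boot zify.
Set Implicit Arguments. Unset Strict Implicit. Unset Printing Implicit Defensive.

Definition bad (a b : nat) := (b.+2 <= a) || (b == a.+1).
Definition badp (f : nat -> nat) i j := (i < j) && bad (f i) (f j).
Definition bad2 f x y := badp f x y || badp f y x.

Definition g (n : nat) (s : bool) (i : nat) : nat :=
  if odd (i + s) then i.-1 else if i.+1 < n then i.+1 else i.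

Section G.
Variables (n : nat) (s : bool).
Local Notation g := (g n s).

Lemma gb i : i.-1 <= g i <= i.+1.
Proof. rewrite /g; case: ifP => h1; [|case: ifP => h2]; lia. Qed.

Lemma glt i : i < n -> g i < n.
Proof. rewrite /g; case: ifP => h1; [|case: ifP => h2]; lia. Qed.

Lemma oddP1 i : odd (i.+1 + s) = ~~ odd (i + s).
Proof. by rewrite addSn. Qed.

Lemma gK i : i < n -> g (g i) = i.
Proof.
move=> hi; rewrite {2}/g; case: ifP => ho.
  case: i hi ho => [|i] hi ho /=.
    by rewrite /g ho.
  by rewrite /g -(negbK (odd (i+s))) -oddP1 ho /= hi.
case: ifP => hn; last by rewrite /g ho hn.
by rewrite /g oddP1 ho.
Qed.

Lemma ginj i j : i < n -> j < n -> g i = g j -> i = j.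
Proof. by move=> hi hj e; rewrite -(gK hi) -(gK hj) e. Qed.

Lemma g_bad i j : i < j -> bad (g i) (g j) -> g j = (g i).+1.
Proof.
move=> hij; have := gb i; have := gb j; rewrite /bad => h1 h2 /orP [h|/eqP h]; lia.
Qed.

Lemma g_noch c : c.+2 < n -> ~~ ((g c < g c.+1) && (g c.+1 < g c.+2)).
Proof.
move=> hc; rewrite /g !oddP1; case: (odd (c + s)) => /=.
  rewrite ifT; last lia. lia.
rewrite ifT; last lia. lia.
Qed.

End G.

Definition Pb n (f : nat -> nat) := [&& all (fun i => f i < n) (iota 0 n),
  all (fun i => all (fun j => (f i == f j) ==> (i == j)) (iota 0 n)) (iota 0 n) &
  all (fun x => all (fun y => all (fun z => (y != z) ==> ~~ (bad2 f x y && bad2 f x z))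
      (iota 0 n)) (iota 0 n)) (iota 0 n)].

Lemma PbP n f : reflect
  [/\ (forall i, i < n -> f i < n),
      (forall i j, i < n -> j < n -> f i = f j -> i = j) &
      (forall x y z, x < n -> y < n -> z < n -> y <> z -> bad2 f x y -> bad2 f x z -> False)]
  (Pb n f).
Proof.
apply: (iffP and3P) => [[/allP h1 /allP h2 /allP h3]|[h1 h2 h3]]; split.
- by move=> i hi; apply: h1; rewrite mem_iota.
- move=> i j hi hj e; have := h2 i; rewrite mem_iota hi => /(_ isT) /allP /(_ j).
  by rewrite mem_iota hj e eqxx => /(_ isT) /eqP.
- move=> x y z hx hy hz yz b1 b2; have := h3 x; rewrite mem_iota hx => /(_ isT) /allP /(_ y).
  rewrite mem_iota hy => /(_ isT) /allP /(_ z); rewrite mem_iota hz => /(_ isT).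
  by move/eqP: yz => -> /=; rewrite b1 b2.
- by apply/allP => i; rewrite mem_iota => /andP[_ /h1].
- apply/allP => i; rewrite mem_iota => /andP[_ hi]; apply/allP => j; rewrite mem_iota => /andP[_ hj].
  by apply/implyP => /eqP /h2 -> //.
- apply/allP => x; rewrite mem_iota => /andP[_ hx]; apply/allP => y; rewrite mem_iota => /andP[_ hy].
  apply/allP => z; rewrite mem_iota => /andP[_ hz]; apply/implyP => /eqP yz.
  by apply/negP => /andP[b1 b2]; apply: (h3 x y z).
Qed.

Lemma bad2_ext n f f' x y : (forall i, i < n -> f i = f' i) -> x < n -> y < n ->
  bad2 f x y = bad2 f' x y.
Proof. by move=> e hx hy; rewrite /bad2 /badp !e. Qed.

Lemma Pb_ext n f f' : (forall i, i < n -> f i = f' i) -> Pb n f = Pb n f'.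
Proof.
move=> e.
suff H : forall f f', (forall i, i < n -> f i = f' i) -> Pb n f -> Pb n f'.
  by apply/idP/idP; apply: H => // i /e.
move=> {}f {}f' {}e /PbP [h1 h2 h3]; apply/PbP; split.
- by move=> i hi; rewrite -e //; apply: h1.
- by move=> i j hi hj; rewrite -!e //; apply: h2.
- move=> x y z hx hy hz yz; rewrite -!(bad2_ext e) //; exact: h3.
Qed.

Lemma Pb_g n s : Pb n (g n s).
Proof.
apply/PbP; split.
- exact: glt.
- exact: ginj.
move=> x y z hx hy hz yz.
have key : forall u v, u < n -> v < n -> bad2 (g n s) u v ->
    (u < v /\ g n s v = (g n s u).+1) \/ (v < u /\ g n s u = (g n s v).+1).
  move=> u v hu hv /orP[/andP[h b]|/andP[h b]].
    by left; split => //; apply: g_bad.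
  by right; split => //; apply: g_bad.
move=> /key-/(_ hx hy) [[l1 e1]|[l1 e1]] /key-/(_ hx hz) [[l2 e2]|[l2 e2]].
- by apply: yz; apply: (@ginj n s _ _ hy hz); rewrite e1 e2.
-
  have := @g_noch n s (g n s z).
  rewrite (gK _ hz) -e2 (gK _ hx) -e1 (gK _ hy) (glt _ hy) /=; lia.
- have := @g_noch n s (g n s y).
  rewrite (gK _ hy) -e1 (gK _ hx) -e2 (gK _ hz) (glt _ hz) /=; lia.
- by apply: yz; apply: (@ginj n s _ _ hy hz); apply: succn_inj; rewrite -e1 -e2.
Qed.

Lemma classify n f : 5 <= n -> Pb n f ->
  (forall v, v < n -> exists2 p, p < n & f p = v) ->
  exists s, forall i, i < n -> f i = g n s i.
Proof.
move=> n5 /PbP [R I H] S.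
have B1 : forall i j, i < j -> bad (f i) (f j) -> bad2 f i j.
  by move=> i j h b; rewrite /bad2 /badp h b.
have B2 : forall i j, i < j -> bad (f i) (f j) -> bad2 f j i.
  by move=> i j h b; rewrite /bad2 /badp h b orbT.
have f0 : f 0 <= 1.
  rewrite leqNgt; apply/negP => a2.
  have [p0 hp0 fp0] := S 0 ltac:(lia).
  have p0pos : 0 < p0 by case: p0 hp0 fp0 => [|//] _ e; move: a2; rewrite e.
  have b0 : bad2 f 0 p0 by apply: B1 => //; rewrite /bad fp0; lia.
  have f0n : f 0 < n by apply: R; lia.
  case: (ltnP 2 (f 0)) => [a3|a2'].
    have [p1 hp1 fp1] := S 1 ltac:(lia).
    have p1pos : 0 < p1 by case: p1 hp1 fp1 => [|//] _ e; move: a3; rewrite e.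
    apply: (H 0 p0 p1) => //; first lia.
      by move=> e; move: fp0; rewrite e fp1.
    by apply: B1 => //; rewrite /bad fp1; lia.
  have [p1 hp1 fp1] := S 3 ltac:(lia).
  have p1pos : 0 < p1 by case: p1 hp1 fp1 => [|//] _ e; move: a2 a2'; rewrite e; lia.
  apply: (H 0 p0 p1) => //; first lia.
    by move=> e; move: fp0; rewrite e fp1.
  by apply: B1 => //; rewrite /bad fp1; lia.
exists (f 0 == 0).
set s := (f 0 == 0).
suff: forall k, k <= n -> forall i, i < k -> f i = g n s i.
  by move=> h i hi; apply: (h n).
elim=> [|k IH] // hk i; rewrite ltnS leq_eqVlt => /orP[/eqP->|hi]; last first.
  by apply: IH => //; lia.
have {}IH : forall i, i < k -> f i = g n s i by apply: IH; lia.
have kn : k < n by [].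
case: (posnP k) => [k0|kpos].
  rewrite k0 /g /s; move: f0; case: (f 0) => [|[|m]] //= _.
  by rewrite ifT //; lia.
have earlier : forall v, v < n -> g n s v < k -> f (g n s v) = v.
  by move=> v hv hg; rewrite IH // gK.
have later : forall v, v < n -> k <= g n s v -> f k != v ->
    exists2 p, k < p < n & f p = v.
  move=> v hv hg hne; have [p hp fp] := S v hv.
  exists p => //; apply/andP; split => //.
  case: (ltngtP k p) => // hpk; last by move: hne; rewrite hpk fp eqxx.
  by move: hg; rewrite -fp (IH _ hpk) gK //; lia.
have notpre : forall v, v < n -> g n s v < k -> f k != v.
  move=> v hv hg; apply/eqP => e.
  have e2 := earlier v hv hg; rewrite -{2}e in e2.
  have := I _ _ (@glt n s v hv) kn e2; lia.
case hA : (odd (k + s)).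
-
  have gk : g n s k = k.-1 by rewrite /g hA.
  have gk1 : g n s k.-1 = k.
    case: k kpos hA kn {IH earlier later notpre hk gk} => [//|k] _ hA kn.
    by rewrite /= /g -(negbK (odd (k + s))) -oddP1 hA /= kn.
  have fk1 : f k.-1 = k by rewrite IH ?gk1 //; lia.
  rewrite gk.
  have fkn : f k < n by apply: R.
  have hge : f k = k.-1 \/ k.+1 <= f k.
    case: (ltnP k (f k)) => hfk; first by right.
    case: (eqVneq (f k) k.-1) => e; first by left.
    exfalso; suff: g n s (f k) < k by move/(notpre _ fkn); rewrite eqxx.
    have := gb n s (f k); case: (eqVneq (f k) k) => e2.
      by rewrite e2 gk; lia.
    lia.
  case: hge => [//|hge]; exfalso.
  have hk1 : k.-1 < n by lia.
  have [p0 /andP[hp0 hp0'] fp0] : exists2 p, k < p < n & f p = k.-1.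
    apply: later; [lia | by rewrite gk1 | lia].
  case: (eqVneq (f k) k.+1) => e.
    apply: (H k k.-1 p0) => //; first lia.
      by apply: B2; [lia | rewrite /bad fk1 e; lia].
    by apply: B1 => //; rewrite /bad fp0 e; lia.
  have b0 : bad2 f k p0 by apply: B1 => //; rewrite /bad fp0; lia.
  case: (leqP 2 k) => k2.
    have hk2 : k.-2 < n by lia.
    have hq : g n s k.-2 < k by have := gb n s k.-2; lia.
    have fq := earlier _ hk2 hq.
    apply: (H p0 k (g n s k.-2)) => //; try lia.
      by apply: B2 => //; rewrite /bad fp0; lia.
    by apply: B2; [lia | rewrite /bad fq fp0; lia].
  case: (leqP (k.+3) (f k)) => k3.
    have hk1' : k.+1 < n by lia.
    have [p1 /andP[hp1 hp1'] fp1] : exists2 p, k < p < n & f p = k.+1.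
      apply: later; [lia | by have := gb n s k.+1; lia | lia].
    apply: (H k p0 p1) => //; first by move=> ee; move: fp0; rewrite ee fp1; lia.
    by apply: B1 => //; rewrite /bad fp1; lia.
  have hk3 : k.+3 < n by lia.
  have [p1 /andP[hp1 hp1'] fp1] : exists2 p, k < p < n & f p = k.+3.
    apply: later; [lia | by have := gb n s k.+3; lia | lia].
  apply: (H k p0 p1) => //; first by move=> ee; move: fp0; rewrite ee fp1; lia.
  by apply: B1 => //; rewrite /bad fp1; lia.
-
  have gk : g n s k = if k.+1 < n then k.+1 else k by rewrite /g hA.
  have gk1 : g n s k.-1 = k.-2.
    case: k kpos hA {IH earlier later notpre kn hk gk} => [//|k] _ hA.
    by rewrite /= /g -(negbK (odd (k + s))) -oddP1 hA.
  have hk1 : k.-1 < n by lia.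
  have hq : g n s k.-1 < k by rewrite gk1; lia.
  have fq := earlier _ hk1 hq.
  have fkn : f k < n by apply: R.
  have hge : k <= f k.
    rewrite leqNgt; apply/negP => hfk.
    suff: g n s (f k) < k by move/(notpre _ fkn); rewrite eqxx.
    have := gb n s (f k); case: (eqVneq (f k) k.-1) => e.
      by rewrite e gk1; lia.
    lia.
  case: (eqVneq (f k) k.+1) => e1.
    by rewrite gk ifT; lia.
  case: (eqVneq (f k) k) => e2.
    rewrite gk; case: ifP => hkn //.
    have [p1 /andP[hp1 hp1'] fp1] : exists2 p, k < p < n & f p = k.+1.
      apply: later; [lia | by have := gb n s k.+1; lia | lia].
    exfalso; apply: (H k (g n s k.-1) p1) => //; try lia.
      by apply: B2 => //; rewrite /bad fq e2; lia.
    by apply: B1 => //; rewrite /bad fp1 e2; lia.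
  exfalso.
  have [p0 /andP[hp0 hp0'] fp0] : exists2 p, k < p < n & f p = k.
    apply: later; [lia | by rewrite gk; case: ifP | lia].
  apply: (H p0 k (g n s k.-1)) => //; try lia.
    by apply: B2 => //; rewrite /bad fp0; lia.
  by apply: B2; [lia | rewrite /bad fq fp0; lia].
Qed.

Fixpoint allt n m : seq (seq nat) :=
  if n is n'.+1 then [seq x :: t | x <- iota 0 m, t <- allt n' m] else [:: [::]].

Lemma mem_allt m t : all (fun x => x < m) t -> t \in allt (size t) m.
Proof.
elim: t => [|x t IH] //= /andP[hx ht].
by apply: (allpairs_f (fun x t => x :: t)); [rewrite mem_iota | apply: IH].
Qed.

Definition Lsmall n : seq (seq nat) :=
  match n with
  | 1 => [:: [:: 0]]
  | 2 => [:: [:: 0; 1]; [:: 1; 0]]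
  | 3 => [:: [:: 0; 2; 1]; [:: 1; 0; 2]; [:: 2; 1; 0]]
  | 4 => [:: [:: 0; 2; 1; 3]; [:: 1; 0; 3; 2]; [:: 1; 3; 0; 2]]
  | _ => [::]
  end.

Definition Lbig n : seq (seq nat) :=
  [:: map (g n false) (iota 0 n); map (g n true) (iota 0 n)].

Definition L n := if n <= 4 then Lsmall n else Lbig n.

Lemma nth_map_iota (f : nat -> nat) n i : i < n -> nth 0 (map f (iota 0 n)) i = f i.
Proof. by move=> hi; rewrite (nth_map 0) ?size_iota // nth_iota. Qed.

Lemma small_ok n : 1 <= n <= 4 ->
  all (fun t => [&& size t == n, all (fun x => x < n) t & Pb n (nth 0 t)]) (Lsmall n).
Proof. by case: n => [|[|[|[|[|n]]]]] //= _; vm_compute. Qed.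

Lemma small_complete n : 1 <= n <= 4 ->
  all (fun t => Pb n (nth 0 t) ==> (t \in Lsmall n)) (allt n n).
Proof. by case: n => [|[|[|[|[|n]]]]] //= _; vm_compute. Qed.

Lemma L_ok n t : 1 <= n -> t \in L n ->
  [/\ size t = n, all (fun x => x < n) t & Pb n (nth 0 t)].
Proof.
move=> n1; rewrite /L; case: ifP => n4 ht.
  have /allP /(_ t ht) /and3P [/eqP h1 h2 h3] := small_ok (n := n) (introT andP (conj n1 n4)).
  by [].
have [s ->] : exists s, t = map (g n s) (iota 0 n).
  by move: ht; rewrite inE => /orP[/eqP->|]; [exists false | rewrite inE => /eqP->; exists true].
split; first by rewrite size_map size_iota.
  by apply/allP => x /mapP [i]; rewrite mem_iota => /andP[_ hi] ->; apply: glt.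
by rewrite (@Pb_ext n _ (g n s)) ?Pb_g // => i hi; rewrite nth_map_iota.
Qed.

Lemma L_complete n f : 1 <= n -> Pb n f ->
  (forall v, v < n -> exists2 p, p < n & f p = v) ->
  map f (iota 0 n) \in L n.
Proof.
move=> n1 hP hS; rewrite /L; case: ifP => n4.
  have /allP := small_complete (n := n) (introT andP (conj n1 n4)).
  have hm : map f (iota 0 n) \in allt n n.
    have := @mem_allt n (map f (iota 0 n)); rewrite size_map size_iota; apply.
    by apply/allP => x /mapP [i]; rewrite mem_iota => /andP[_ hi] ->; move/PbP: hP => [h _ _]; apply: h.
  move=> /(_ _ hm) /implyP; apply.
  by rewrite (@Pb_ext n _ f) // => i hi; rewrite nth_map_iota.
have [|s hs] := classify _ hP hS; first by move: n4; rewrite leqNgt => /negbFE.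
rewrite (_ : map f (iota 0 n) = map (g n s) (iota 0 n)).
  by case: s {hs}; rewrite /Lbig !inE eqxx ?orbT.
by apply/eq_in_map => i; rewrite mem_iota => /andP[_ hi]; apply: hs.
Qed.

Lemma L_uniq n : 1 <= n -> uniq (L n).
Proof.
move=> n1; rewrite /L; case: ifP => n4.
  by case: n n1 n4 => [|[|[|[|[|n]]]]].
rewrite /Lbig /= andbT inE; apply/eqP => e.
have := congr1 (fun t => nth 0 t 0) e; rewrite /= !nth_map_iota ?n1 // /g /=.
by rewrite ifT //; move: n4; rewrite leqNgt => /negbFE; lia.
Qed.

Lemma L_size n : 1 <= n ->
  size (L n) = if n == 1 then 1 else if (n == 3) || (n == 4) then 3 else 2.
Proof.
move=> n1; rewrite /L; case: ifP => n4.
  by case: n n1 n4 => [|[|[|[|[|n]]]]].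
move: n4; rewrite leqNgt => /negbFE n4.
by rewrite /Lbig /= ifN ?ifN //; lia.
Qed.

Lemma pair_uniq n f a b a' b' w :
  (forall i j, i < n -> j < n -> f i = f j -> i = j) ->
  (forall x y z, x < n -> y < n -> z < n -> y <> z -> bad2 f x y -> bad2 f x z -> False) ->
  b < n -> b' < n ->
  a < b -> bad (f a) (f b) -> (f a = w \/ f b = w) ->
  a' < b' -> bad (f a') (f b') -> (f a' = w \/ f b' = w) -> a = a' /\ b = b'.
Proof.
move=> I H hb hb' ab bb hw ab' bb' hw'.
have ha : a < n by lia.
have ha' : a' < n by lia.
have L1 : bad2 f a b by rewrite /bad2 /badp ab bb.
have L2 : bad2 f b a by rewrite /bad2 /badp ab bb orbT.
have L3 : bad2 f a' b' by rewrite /bad2 /badp ab' bb'.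
have L4 : bad2 f b' a' by rewrite /bad2 /badp ab' bb' orbT.
case: hw => e; case: hw' => e'.
- have eaa : a = a' by apply: I => //; rewrite e e'.
  split => //; case: (eqVneq b b') => [//|nb]; exfalso.
  by apply: (H a b b') => //; [apply/eqP | rewrite eaa].
- have eab : a = b' by apply: I => //; rewrite e e'.
  exfalso; apply: (H a b a') => //; first lia.
  by rewrite eab.
- have eab : b = a' by apply: I => //; rewrite e e'.
  exfalso; apply: (H b a b') => //; first lia.
  by rewrite eab.
- have ebb : b = b' by apply: I => //; rewrite e e'.
  split => //; case: (eqVneq a a') => [//|na]; exfalso.
  by apply: (H b a a') => //; [apply/eqP | rewrite ebb].
Qed.

Section Bridge.
Variable n : nat.

Definition F (o : {ffun 'I_#|'I_n| -> 'I_n}) (k : nat) : nat :=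
  match (insub k : option 'I_#|'I_n|) with Some i => nat_of_ord (o i) | None => 0 end.

Lemma FE o (i : 'I_#|'I_n|) : F o i = o i.
Proof. by rewrite /F valK. Qed.

Lemma ordN k : k < n -> {i : 'I_#|'I_n| | nat_of_ord i = k}.
Proof. move=> hk; have hk' : k < #|'I_n| by rewrite card_ord. by exists (Ordinal hk'). Qed.

Lemma ordlt (i : 'I_#|'I_n|) : (i : nat) < n.
Proof. exact: leq_trans (ltn_ord i) (eq_leq (card_ord n)). Qed.

Lemma matchingP o : matching_ordering (@Pn_edge n) o = Pb n (F o).
Proof.
apply/idP/idP.
- move=> /andP [/injectiveP inj /forallP hall]; apply/PbP; split.
  - by move=> i /ordN [I <-]; rewrite FE.
  - move=> i j /ordN [I <-] /ordN [J <-]; rewrite !FE => e.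
    by congr nat_of_ord; apply: inj; apply: val_inj.
  move=> x y z /ordN [X <-] /ordN [Y <-] /ordN [Z <-] yz bxy bxz.
  have := hall (o X) => /card_le1_eqP hc.
  have mem : forall Y : 'I_#|'I_n|, bad2 (F o) X Y ->
     (if (X < Y)%N then (X, Y) else (Y, X)) \in
     [set p | backedge (@Pn_edge n) o p && ((o p.1 == o X) || (o p.2 == o X))].
    move=> W; rewrite /bad2 /badp !FE inE /backedge; case: ifP => h /=.
      move=> b; rewrite h eqxx /= ?andbT; case/orP: b => [b|/andP[h2]]; [exact: b | lia].
    by case/andP => h2 b; rewrite h2 eqxx orbT /= ?andbT; exact: b.
  have := hc _ _ (mem _ bxy) (mem _ bxz).
  move: bxy bxz; rewrite /bad2 /badp.
  case: (ltngtP X Y) => hxy; case: (ltngtP X Z) => hxz //=; try by rewrite ?ltnn ?andbF.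
  1-4: move=> _ _ [] *; apply: yz; congruence.
- move/PbP => [R I H]; apply/andP; split.
  apply/injectiveP => i j e; apply: val_inj; apply: I; try exact: ordlt.
  by rewrite !FE e.
apply/forallP => v; apply/card_le1_eqP => [[a b] [a' b']]; rewrite !inE /backedge /=.
move=> /andP[/andP[ab bb] hw] /andP[/andP[ab' bb'] hw'].
have [] := @pair_uniq n (F o) a b a' b' v I H (ordlt b) (ordlt b') ab _ _ ab' _ _.
- by rewrite !FE.
- by rewrite !FE; case/orP: hw => /eqP ->; [left|right].
- by rewrite !FE.
- by rewrite !FE; case/orP: hw' => /eqP ->; [left|right].
by move=> /val_inj -> /val_inj ->.
Qed.

Lemma F_surj (o : {ffun 'I_#|'I_n| -> 'I_n}) : injective o -> forall v, v < n -> exists2 p, p < n & F o p = v.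
Proof.
move=> inj v hv.
have : Ordinal hv \in codom o by apply: inj_card_onto; rewrite ?card_ord.
move/codomP => [x ex]; exists x; first exact: ordlt.
by rewrite FE -ex.
Qed.

End Bridge.

Lemma count_main n : 1 <= n ->
  num_matching_orderings (@Pn_edge n) = size (L n).
Proof.
move=> n1; rewrite /num_matching_orderings.
set A := [set o | _].
pose phi (o : {ffun 'I_#|'I_n| -> 'I_n}) := map (F o) (iota 0 n).
have key : forall o, (o \in A) = (phi o \in L n).
  move=> o; rewrite inE matchingP; apply/idP/idP => h.
    apply: L_complete => //; apply: F_surj.
    by move: h; rewrite -matchingP => /andP[/injectiveP].
  have [_ _ hP] := L_ok n1 h.
  by rewrite (@Pb_ext n (F o) (nth 0 (phi o))) // => i hi; rewrite nth_map_iota.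
have phi_inj : injective phi.
  move=> o o' e; apply/ffunP => i; apply: val_inj.
  have := congr1 (fun t => nth 0 t i) e; rewrite /= !nth_map_iota ?ordlt //.
  by rewrite !FE.
have onto : forall t, t \in L n -> exists o, phi o = t.
  move=> t ht; have [st ht1 _] := L_ok n1 ht.
  exists [ffun i : 'I_#|'I_n| => (Ordinal (ltn_pmod (nth 0 t i) n1) : 'I_n)].
  rewrite /phi -{3}(mkseq_nth 0 t) st /mkseq; apply/eq_in_map => k.
  rewrite mem_iota => /andP[_ hk]; have [I <-] := ordN hk.
  rewrite FE ffunE /= modn_small //.
  by move/allP: ht1; apply; rewrite mem_nth // st ordlt.
rewrite cardE.
have -> : size (enum A) = size (map phi (enum A)) by rewrite size_map.
apply: perm_size; apply: uniq_perm.
- by rewrite (map_inj_uniq phi_inj) enum_uniq.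
- exact: L_uniq.
move=> t; apply/mapP/idP => [[o ho ->]|ht].
  by rewrite -key -mem_enum.
have [o ho] := onto t ht; exists o => //.
by rewrite mem_enum key ho.
Qed.

Theorem corollary5p6 (n : nat) : 1 <= n ->
  num_matching_orderings (@Pn_edge n) =
    if n == 1 then 1 else if (n == 3) || (n == 4) then 3 else 2.
Proof. by move=> n1; rewrite count_main // L_size. Qed.
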